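(* Let $\mathscr{H}$ be a complex Hilbert space, let $X,Y\in\mathbb{B}(\mathscr{H})$ and let $0\leq\alpha\leq1$, $0\leq\beta\leq1$. Then for every $x\in\mathscr{H}$ with $\|x\|=1$, $$|\langle Xx,x\rangle\langle Yx,x\rangle|\leq\frac{1}{4}\left\|\alpha|X|^2+(1-\alpha)|X^*|^2+\beta|Y|^2+(1-\beta)|Y^*|^2\right\|+\frac{1}{8}\left\||X|^2+|Y^*|^2\right\|+\frac{1}{4}\,w(YX).$$
   Context: $\mathbb{B}(\mathscr{H})$ denotes the algebra of bounded linear operators on $\mathscr{H}$; $\|\cdot\|$ is the operator norm. For $T\in\mathbb{B}(\mathscr{H})$, $|T|=(T^*T)^{1/2}$, and $w(T)=\sup\{|\langle Tx,x\rangle|: \|x\|=1\}$ is the numerical radius. *)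

(* Defs.v *)
From HB Require Import structures.
From mathcomp Require Import all_boot all_order all_algebra.
From mathcomp Require Import all_classical all_reals.
From mathcomp Require Export complex.
Set Implicit Arguments. Unset Strict Implicit. Unset Printing Implicit Defensive.
Import Order.TTheory GRing.Theory Num.Theory.
Local Open Scope ring_scope.
Local Open Scope classical_set_scope.

Section Hilbert.
Variable R : realType.
Local Notation C := (R[i]).
Variable V : lmodType C.

Definition is_inner_product (ip : V -> V -> C) : Prop :=
  [/\ forall (a : C) (x y z : V), ip (a *: x + y) z = a * ip x z + ip y z,
      forall x y : V, ip y x = (ip x y)^*,
      forall x : V, 0 <= ip x x
    & forall x : V, ip x x = 0 -> x = 0].

Definition ipnorm (ip : V -> V -> C) (x : V) : R :=
  Num.sqrt (complex.Re (ip x x)).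

Definition ip_complete (ip : V -> V -> C) : Prop :=
  forall u : nat -> V,
    (forall e : R, 0 < e -> exists N : nat, forall m n : nat,
        (N <= m)%N -> (N <= n)%N -> ipnorm ip (u m - u n) < e) ->
    exists l : V, forall e : R, 0 < e -> exists N : nat, forall n : nat,
        (N <= n)%N -> ipnorm ip (u n - l) < e.

Definition is_hilbert (ip : V -> V -> C) : Prop :=
  is_inner_product ip /\ ip_complete ip.

Definition is_bounded_op (ip : V -> V -> C) (T : V -> V) : Prop :=
  linear T /\ exists M : R, forall x : V, ipnorm ip (T x) <= M * ipnorm ip x.

Definition is_adjoint (ip : V -> V -> C) (T Ts : V -> V) : Prop :=
  forall x y : V, ip (T x) y = ip x (Ts y).

Definition opnorm (ip : V -> V -> C) (T : V -> V) : R :=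
  sup [set ipnorm ip (T x) | x in [set x : V | ipnorm ip x <= 1]].

Definition numrad (ip : V -> V -> C) (T : V -> V) : R :=
  sup [set complex.Re `|ip (T x) x| | x in [set x : V | ipnorm ip x = 1]].

End Hilbert.

(* Main.v *)
Require Import Defs.
From HB Require Import structures.
From mathcomp Require Import all_boot all_order all_algebra.
From mathcomp Require Import all_classical all_reals.
From mathcomp Require Import complex.
From mathcomp Require Import ring lra.
Import Order.TTheory GRing.Theory Num.Theory.
Local Open Scope ring_scope.
Set Implicit Arguments. Unset Strict Implicit.


Section Aux.
Variable R : realType.
Variable V : lmodType R[i].
Variable ip : V -> V -> R[i].
Hypothesis hip : is_inner_product ip.
Local Notation nrm := (ipnorm ip).

Lemma ipDl x y z : ip (x + y) z = ip x z + ip y z.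
Proof. by case: hip => h _ _ _; have := h 1 x y z; rewrite scale1r mul1r. Qed.

Lemma ip0l z : ip 0 z = 0.
Proof.
case: hip => h _ _ _; have e := h 1 0 0 z; rewrite scale1r addr0 mul1r in e.
by apply: (addrI (ip 0 z)); rewrite addr0 -e.
Qed.

Lemma ipZl a x z : ip (a *: x) z = a * ip x z.
Proof. by case: hip => h _ _ _; have := h a x 0 z; rewrite addr0 ip0l addr0. Qed.

Lemma ipNl x z : ip (- x) z = - ip x z.
Proof. by rewrite -scaleN1r ipZl mulN1r. Qed.

Lemma ipBl x y z : ip (x - y) z = ip x z - ip y z.
Proof. by rewrite ipDl ipNl. Qed.

Lemma ipc x y : ip y x = (ip x y)^*.
Proof. by case: hip. Qed.

Lemma ipDr z x y : ip z (x + y) = ip z x + ip z y.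
Proof. by rewrite (ipc (x + y) z) (ipc x z) (ipc y z) ipDl rmorphD. Qed.

Lemma ipZr z a x : ip z (a *: x) = a^* * ip z x.
Proof. by rewrite (ipc (a *: x) z) (ipc x z) ipZl rmorphM. Qed.

Lemma ipNr z x : ip z (- x) = - ip z x.
Proof. by rewrite (ipc (- x) z) (ipc x z) ipNl rmorphN. Qed.

Lemma ipBr z x y : ip z (x - y) = ip z x - ip z y.
Proof. by rewrite ipDr ipNr. Qed.

Lemma ip0r z : ip z 0 = 0.
Proof. by rewrite ipc ip0l conjC0. Qed.

Lemma ipxx_ge0 x : 0 <= ip x x.
Proof. by case: hip. Qed.

Lemma Re_ge0 (z : R[i]) : 0 <= z -> 0 <= complex.Re z.
Proof. by rewrite lecE => /andP[_]. Qed.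

Lemma Re_le (z w : R[i]) : z <= w -> complex.Re z <= complex.Re w.
Proof. by rewrite lecE => /andP[_]. Qed.

Lemma ip_self x : ip x x = ((nrm x) ^+ 2)%:C%C.
Proof.
rewrite /ipnorm sqr_sqrtr; last exact: Re_ge0 (ipxx_ge0 x).
by rewrite RRe_real // ger0_real // ipxx_ge0.
Qed.

Lemma nrm_ge0 x : 0 <= nrm x.
Proof. exact: sqrtr_ge0. Qed.

Lemma normE (z : R[i]) : `|z| = (complex.Re `|z|)%:C%C.
Proof. by rewrite RRe_real // normr_real. Qed.

Lemma Renorm_ge0 (z : R[i]) : 0 <= complex.Re `|z|.
Proof. by apply: Re_ge0. Qed.

Lemma Renorm_real (r : R) : complex.Re `|r%:C%C| = `|r|.
Proof. by rewrite normc_def /= expr0n /= addr0 sqrtr_sqr. Qed.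

Lemma CS_C u v : `|ip u v| ^+ 2 <= ip u u * ip v v.
Proof.
set t := ip u v; set a := ip v v.
have ha : 0 <= a := ipxx_ge0 v.
have har : a^* = a by rewrite /a -ipc.
have key : ip (a *: u - t *: v) (a *: u - t *: v) = a * (a * ip u u - t * t^*).
  rewrite ipBl !ipBr !ipZl !ipZr har -/t -/a (ipc u v) -/t; ring.
have := ipxx_ge0 (a *: u - t *: v); rewrite key.
case: (eqVneq a 0) => [a0|an0].
  have v0 : v = 0 by case: hip => _ _ _; apply.
  by move=> _; rewrite a0 /t v0 ip0r normr0 expr0n /= mulr0.
have apos : 0 < a by rewrite lt_def an0 ha.
rewrite pmulr_rge0 // subr_ge0 => h.
by rewrite normCK [_ * a]mulrC.
Qed.

Lemma CS u v : complex.Re `|ip u v| <= nrm u * nrm v.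
Proof.
have := CS_C u v; rewrite (normE (ip u v)) !ip_self -!rmorphXn -!rmorphM lecR => h.
have := Renorm_ge0 (ip u v); have := nrm_ge0 u; have := nrm_ge0 v.
move=> hv hu hr. rewrite -exprMn in h. rewrite /=; rewrite -(@ler_pXn2r _ 2) // ?nnegrE ?mulr_ge0 //.
Qed.


Local Notation Rec := complex.Re.

Lemma ReD (a b : R[i]) : Rec (a + b) = Rec a + Rec b.
Proof. by case: a; case: b. Qed.

Lemma ReJ (a : R[i]) : Rec (a^*) = Rec a.
Proof. by case: a. Qed.

Lemma conjR (r : R) : (r%:C%C)^* = r%:C%C.
Proof. exact: conjc_real. Qed.

Lemma Re_le_norm (z : R[i]) : Rec z <= Rec `|z|.
Proof.
apply: le_trans (ler_norm _) _.
by have := normc_ge_Re z; rewrite lecR.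
Qed.

Lemma nrmD u v : nrm (u + v) <= nrm u + nrm v.
Proof.
have e : ((nrm (u + v)) ^+ 2)%:C%C = ((nrm u) ^+ 2)%:C%C + ip u v + (ip u v)^* + ((nrm v) ^+ 2)%:C%C.
  by rewrite -!ip_self ipDl !ipDr -(ipc u v) !addrA.
have e' := congr1 (@complex.Re R) e; rewrite /= !ReD ReJ /= in e'.
have h := le_trans (Re_le_norm (ip u v)) (CS u v).
have := nrm_ge0 u; have := nrm_ge0 v; have := nrm_ge0 (u + v) => h0 h1 h2.
rewrite -(@ler_pXn2r _ 2) // ?nnegrE ?addr_ge0 //.
nra.
Qed.

Lemma nrmZ (r : R) v : 0 <= r -> nrm (r%:C%C *: v) = r * nrm v.
Proof.
move=> r0; rewrite {1}/ipnorm ipZl ipZr conjR ip_self -!rmorphM /=.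
by rewrite mulrA -expr2 -exprMn sqrtr_sqr ger0_norm // mulr_ge0 // nrm_ge0.
Qed.

Definition bnd (T : V -> V) :=
  exists K, 0 <= K /\ forall v, nrm (T v) <= K * nrm v.

Lemma bnd_of T : is_bounded_op ip T -> bnd T.
Proof.
case=> _ [M hM]; exists `|M|; split => // v.
apply: le_trans (hM v) _; apply: ler_wpM2r; [exact: nrm_ge0 | exact: ler_norm].
Qed.

Lemma bnd_comp S T : bnd S -> bnd T -> bnd (fun v => S (T v)).
Proof.
case=> [KS [hS0 hS]] [KT [hT0 hT]]; exists (KS * KT); split; first exact: mulr_ge0.
move=> v; apply: le_trans (hS _) _; rewrite -mulrA; exact: ler_wpM2l.
Qed.

Lemma bnd_add S T : bnd S -> bnd T -> bnd (fun v => S v + T v).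
Proof.
case=> [KS [hS0 hS]] [KT [hT0 hT]]; exists (KS + KT); split; first exact: addr_ge0.
move=> v; apply: le_trans (nrmD _ _) _; rewrite mulrDl; exact: lerD.
Qed.

Lemma bnd_scale (r : R) T : 0 <= r <= 1 -> bnd T -> bnd (fun v => r%:C%C *: T v).
Proof.
case/andP=> r0 r1 [K [hK0 hK]]; exists K; split => // v.
rewrite nrmZ //; apply: le_trans (hK v); rewrite -[X in _ <= X]mul1r.
by apply: ler_wpM2r => //; exact: nrm_ge0.
Qed.

Lemma bnd_adj T Ts : bnd T -> is_adjoint ip T Ts -> bnd Ts.
Proof.
case=> [K [hK0 hK]] hadj; exists K; split => // y.
have e : Rec (ip (T (Ts y)) y) = nrm (Ts y) ^+ 2 by rewrite hadj ip_self.
have h := le_trans (Re_le_norm _) (CS (T (Ts y)) y).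
rewrite e in h; have h2 := hK (Ts y).
have := nrm_ge0 y; have := nrm_ge0 (Ts y) => hs hn.
have hKn : 0 <= K * nrm y by apply: mulr_ge0.
nra.
Qed.

Lemma ip_one x : nrm x = 1 -> ip x x = 1.
Proof. by move=> h; rewrite ip_self h expr1n. Qed.

Lemma opnorm_ge T x : bnd T -> nrm x = 1 -> Rec `|ip (T x) x| <= opnorm ip T.
Proof.
case=> [K [hK0 hK]] hx.
apply: le_trans (CS _ _) _; rewrite hx mulr1.
apply: sup_upper_bound; last by exists x => //=; rewrite hx.
split; first by exists (nrm (T x)), x => //=; rewrite hx.
exists K => _ [v hv <-]; apply: le_trans (hK v) _.
by rewrite -[X in _ <= X]mulr1; apply: ler_wpM2l.
Qed.

Lemma numrad_ge T x : bnd T -> nrm x = 1 -> Rec `|ip (T x) x| <= numrad ip T.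
Proof.
case=> [K [hK0 hK]] hx.
apply: sup_upper_bound; last by exists x.
split; first by exists (Rec `|ip (T x) x|), x.
exists K => _ [v hv <-]; apply: le_trans (CS _ _) _; rewrite hv mulr1.
by apply: le_trans (hK v) _; rewrite hv mulr1.
Qed.

Lemma buzano u v x : nrm x = 1 ->
  2 * Rec `|ip u x * ip x v| <= nrm u * nrm v + Rec `|ip u v|.
Proof.
move=> hx; have hxx := ip_one hx.
set c := ip u x; set w := (2 * c) *: x - u.
have hww : ip w w = ip u u.
  rewrite /w ipBl !ipBr !ipZl !ipZr hxx (ipc u x) -/c rmorphM rmorph_nat; ring.
have nw : nrm w = nrm u by rewrite /ipnorm hww.
have hwv : ip w v = 2 * c * ip x v - ip u v by rewrite /w ipBl ipZl.
have h1 := CS w v; rewrite nw in h1.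
have h2 : `|2 * c * ip x v| <= `|ip w v| + `|ip u v|.
  by rewrite hwv -[X in `|X|](subrK (ip u v)) ler_normD.
have h3 := Re_le h2; rewrite ReD in h3.
have e : Rec `|2 * c * ip x v| = 2 * Rec `|c * ip x v|.
  rewrite -mulrA normrM normr_nat !mulr_natl !mulr2n; exact: ReD.
rewrite e in h3; lra.
Qed.

End Aux.

Unset Implicit Arguments.
Local Open Scope complex_scope.

Theorem mainTheorem3 (R : realType) (V : lmodType R[i]) (ip : V -> V -> R[i])
  (X Xs Y Ys : V -> V) (alpha beta : R) :
  is_hilbert ip ->
  is_bounded_op ip X -> is_bounded_op ip Y ->
  is_adjoint ip X Xs -> is_adjoint ip Y Ys ->
  0 <= alpha <= 1 -> 0 <= beta <= 1 ->
  forall x : V, ipnorm ip x = 1 ->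
    complex.Re `|ip (X x) x * ip (Y x) x|
    <= 4^-1 * opnorm ip (fun v => alpha%:C *: Xs (X v) + (1 - alpha)%:C *: X (Xs v)
                                  + beta%:C *: Ys (Y v) + (1 - beta)%:C *: Y (Ys v))
       + 8^-1 * opnorm ip (fun v => Xs (X v) + Y (Ys v))
       + 4^-1 * numrad ip (fun v => Y (X v)).
Proof.
move=> [hip _] hX hY hXa hYa ha hb x hx.
have bX := bnd_of hX; have bY := bnd_of hY.
have bXs := bnd_adj hip bX hXa; have bYs := bnd_adj hip bY hYa.
have ha' : 0 <= 1 - alpha <= 1 by apply/andP; split; case/andP: ha => *; lra.
have hb' : 0 <= 1 - beta <= 1 by apply/andP; split; case/andP: hb => *; lra.
set nX := ipnorm ip (X x); set nXs := ipnorm ip (Xs x).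
set nY := ipnorm ip (Y x); set nYs := ipnorm ip (Ys x).
have e1 : ip (Xs (X x)) x = (nX ^+ 2)%:C.
  by rewrite (ipc hip x) -hXa (ip_self hip) conjR.
have e2 : ip (X (Xs x)) x = (nXs ^+ 2)%:C by rewrite hXa (ip_self hip).
have e3 : ip (Ys (Y x)) x = (nY ^+ 2)%:C.
  by rewrite (ipc hip x) -hYa (ip_self hip) conjR.
have e4 : ip (Y (Ys x)) x = (nYs ^+ 2)%:C by rewrite hYa (ip_self hip).
have bA : bnd ip (fun v => alpha%:C *: Xs (X v) + (1 - alpha)%:C *: X (Xs v)
                                  + beta%:C *: Ys (Y v) + (1 - beta)%:C *: Y (Ys v)).
  apply: (bnd_add hip); [apply: (bnd_add hip); [apply: (bnd_add hip)|]|];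
    apply: (bnd_scale hip) => //; exact: bnd_comp.
have hA := opnorm_ge hip bA hx; rewrite !(ipDl hip) !(ipZl hip) e1 e2 e3 e4 in hA.
rewrite -!rmorphM -!rmorphD Renorm_real in hA.
have hA' := le_trans (ler_norm _) hA.
have bB : bnd ip (fun v => Xs (X v) + Y (Ys v)).
  by apply: (bnd_add hip); apply: bnd_comp.
have hB := opnorm_ge hip bB hx; rewrite !(ipDl hip) e1 e4 in hB.
rewrite -!rmorphD Renorm_real in hB.
have hB' := le_trans (ler_norm _) hB.
have hN := numrad_ge hip (bnd_comp bY bX) hx.
have hBu := buzano hip (X x) (Ys x) hx.
rewrite -hYa -hYa in hBu.
set a := ip (X x) x; set b := ip (Y x) x.
have hra1 : complex.Re `|a| <= nX by have := CS hip (X x) x; rewrite hx mulr1.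
have hra2 : complex.Re `|a| <= nXs by have := CS hip x (Xs x); rewrite hx mul1r -hXa.
have hrb1 : complex.Re `|b| <= nY by have := CS hip (Y x) x; rewrite hx mulr1.
have hrb2 : complex.Re `|b| <= nYs by have := CS hip x (Ys x); rewrite hx mul1r -hYa.
have eab : complex.Re `|a * b| = complex.Re `|a| * complex.Re `|b|.
  by rewrite normrM (normE a) (normE b) -rmorphM.
rewrite eab in hBu *; rewrite -/nX -/nYs in hBu.
have ra0 := Renorm_ge0 a; have rb0 := Renorm_ge0 b.
move: hra1 hra2 hrb1 hrb2 hBu ra0 rb0 hA' hB' hN.
set ra := complex.Re `|a|; set rb := complex.Re `|b|.
set opA := opnorm _ _; set opB := opnorm _ _; set nr := numrad _ _; set rw := complex.Re _.
move=> hra1 hra2 hrb1 hrb2 hBu ra0 rb0 hA' hB' hN.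
have s1 : 2 * (ra * rb) <= ra ^+ 2 + rb ^+ 2 by have := sqr_ge0 (ra - rb); nra.
have s2 : 2 * (nX * nYs) <= nX ^+ 2 + nYs ^+ 2 by have := sqr_ge0 (nX - nYs); nra.
have q1 : ra ^+ 2 <= nX ^+ 2 by nra.
have q2 : ra ^+ 2 <= nXs ^+ 2 by nra.
have q3 : rb ^+ 2 <= nY ^+ 2 by nra.
have q4 : rb ^+ 2 <= nYs ^+ 2 by nra.
case/andP: ha => a0 a1; case/andP: hb => b0 b1.
have m1 : 0 <= alpha * (nX ^+ 2 - ra ^+ 2) by apply: mulr_ge0; lra.
have m2 : 0 <= (1 - alpha) * (nXs ^+ 2 - ra ^+ 2) by apply: mulr_ge0; lra.
have m3 : 0 <= beta * (nY ^+ 2 - rb ^+ 2) by apply: mulr_ge0; lra.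
have m4 : 0 <= (1 - beta) * (nYs ^+ 2 - rb ^+ 2) by apply: mulr_ge0; lra.
have t : ra ^+ 2 + rb ^+ 2 <= opA.
  apply: le_trans hA'.
  have -> : ra ^+ 2 + rb ^+ 2 = alpha * ra ^+ 2 + (1 - alpha) * ra ^+ 2 + beta * rb ^+ 2 + (1 - beta) * rb ^+ 2 by ring.
  rewrite !mulrBr in m1 m2 m3 m4; lra.
lra.
Qed.
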